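(* Let $p$ be a prime, $s,m$ positive integers, $n=sm$, $c\in\mathbb{F}_{p^s}$, and $F\in\mathbb{F}_{p^s}[x]$ viewed as a function $\mathbb{F}_{p^n}\to\mathbb{F}_{p^n}$. Let $a,b\in\mathbb{F}_{p^s}$, with $a\neq 0$ if $c=1$. (i) If $F$ is PcN, then the equation $F(x+a)-cF(x)=b$ has no solution $x\in\mathbb{F}_{p^n}\setminus\mathbb{F}_{p^s}$. (ii) If $F$ is APcN and $m$ is odd, then the equation $F(x+a)-cF(x)=b$ has no solution $x\in\mathbb{F}_{p^n}\setminus\mathbb{F}_{p^s}$.
   Context: For $F:\mathbb{F}_{p^n}\to\mathbb{F}_{p^n}$ and $c\in\mathbb{F}_{p^n}$, let ${}_c\Delta_F(a,b)=\#\{x\in\mathbb{F}_{p^n}: F(x+a)-cF(x)=b\}$ and $\delta_{F,c}=\max\{{}_c\Delta_F(a,b): a,b\in\mathbb{F}_{p^n},\ a\neq 0\text{ if } c=1\}$. $F$ is perfect $c$-nonlinear (PcN) if $\delta_{F,c}=1$ and almost perfect $c$-nonlinear (APcN) if $\delta_{F,c}=2$. *)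

(* Defs.v *)
From HB Require Import structures.
From mathcomp Require Import all_boot all_order all_algebra all_field.
Set Implicit Arguments. Unset Strict Implicit. Unset Printing Implicit Defensive.
Import Order.TTheory GRing.Theory.
Local Open Scope ring_scope.

(* The ambient finite field L plays the role of F_{p^n}; the subfield F_{p^s}
   is the set of fixed points of x |-> x^(p^s) (the unique subfield of order p^s). *)
Definition in_subfield (L : finFieldType) (q : nat) (x : L) : bool := x ^+ q == x.

Definition cDelta (L : finFieldType) (F : L -> L) (c a b : L) : nat :=
  #|[set x : L | F (x + a) - c * F x == b]|.

Definition cdelta (L : finFieldType) (F : L -> L) (c : L) : nat :=
  \max_(ab : L * L | (c != 1) || (ab.1 != 0)) cDelta F c ab.1 ab.2.

Definition PcN (L : finFieldType) (F : L -> L) (c : L) : Prop := cdelta F c = 1%N.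
Definition APcN (L : finFieldType) (F : L -> L) (c : L) : Prop := cdelta F c = 2%N.

(* Main.v *)
Require Import Defs.
From HB Require Import structures.
From mathcomp Require Import all_boot all_order all_algebra all_field.
Import GRing.Theory.
Local Open Scope ring_scope.

Section Aux.
Variables (L : finFieldType) (q : nat).
Hypothesis qpos : (0 < q)%N.
Hypothesis qadd : forall x y : L, (x + y) ^+ q = x ^+ q + y ^+ q.

Lemma q0 : (0 : L) ^+ q = 0.
Proof. by rewrite expr0n; case: q qpos. Qed.

Lemma qopp (x : L) : (- x) ^+ q = - x ^+ q.
Proof.
apply/eqP; rewrite -subr_eq0 opprK addrC -qadd subrr; apply/eqP; exact: q0.
Qed.

Lemma qsub (x y : L) : (x - y) ^+ q = x ^+ q - y ^+ q.
Proof. by rewrite qadd qopp. Qed.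

Lemma qhorner (P : {poly L}) (x : L) :
  (forall i, P`_i ^+ q = P`_i) -> P.[x] ^+ q = P.[x ^+ q].
Proof.
move=> HP; rewrite !horner_coef.
rewrite (big_morph (fun z : L => z ^+ q) qadd q0).
apply: eq_bigr => i _; by rewrite exprMn HP -!exprM mulnC.
Qed.

Lemma qinj (x y : L) : x ^+ q = y ^+ q -> x = y.
Proof.
move=> h; apply/eqP; rewrite -subr_eq0.
have : (x - y) ^+ q == 0 by rewrite qsub h subrr.
by rewrite expf_eq0 qpos.
Qed.
End Aux.

Theorem proposition2p3 (L : finFieldType) (p s m : nat) (P : {poly L}) (c a b : L) :
  prime p -> p \in [pchar L] -> (0 < s)%N -> (0 < m)%N -> #|L| = (p ^ (s * m))%N ->
  in_subfield (p ^ s) c ->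
  (forall i : nat, in_subfield (p ^ s) P`_i) ->
  in_subfield (p ^ s) a -> in_subfield (p ^ s) b ->
  (c = 1 -> a != 0) ->
  (PcN (fun x => P.[x]) c ->
     forall x : L, P.[x + a] - c * P.[x] = b -> in_subfield (p ^ s) x) /\
  (APcN (fun x => P.[x]) c -> odd m ->
     forall x : L, P.[x + a] - c * P.[x] = b -> in_subfield (p ^ s) x).
Proof.
move=> pr pch s0 m0 cardL hc hP ha hb hca.
set q := (p ^ s)%N.
have qpos : (0 < q)%N by rewrite expn_gt0 prime_gt0.
have qadd : forall x y : L, (x + y) ^+ q = x ^+ q + y ^+ q.
  move=> x y; apply: exprDn_pchar; rewrite pnatX (pnatE _ pr); by rewrite pch.
have fix_ : forall z : L, in_subfield q z -> z ^+ q = z by move=> z /eqP.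
set S := [set x : L | P.[x + a] - c * P.[x] == b].
have Sq : forall y, y \in S -> y ^+ q \in S.
  move=> y; rewrite !inE => /eqP hy; apply/eqP.
  have hPq : forall i, P`_i ^+ q = P`_i by move=> i; exact: fix_ (hP i).
  rewrite -(fix_ a ha) -qadd -(@qhorner L q qpos qadd P _ hPq).
  rewrite -(@qhorner L q qpos qadd P _ hPq).
  by rewrite -(fix_ c hc) -exprMn -(@qsub L q qpos qadd) hy (fix_ b hb).
have Sle : (#|S| <= cdelta (fun x => P.[x]) c)%N.
  rewrite /cdelta; apply: (leq_bigmax_cond (a, b)) => /=.
  by case: eqP => [/hca -> | _]; rewrite ?orbT.
split.
- move=> hP1 x hx; apply/negPn/negP => hnx.
  have xS : x \in S by rewrite inE hx.
  have : (2 <= #|S|)%N.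
    have -> : 2%N = #|[set x; x ^+ q]|.
      rewrite cards2; case: eqP => // e; move: hnx; by rewrite /in_subfield -e eqxx.
    apply: subset_leq_card; apply/subsetP => y Hy.
    have : (y == x) || (y == x ^+ q) by move: Hy; rewrite !inE.
    by case/orP => /eqP ->; rewrite ?Sq.
  move: Sle; rewrite hP1 => h1 h2; have := leq_trans h2 h1; done.
- move=> hP2 modd x hx; apply/negPn/negP => hnx.
  have xS : x \in S by rewrite inE hx.
  have nx1 : x ^+ q != x by [].
  have nx2 : (x ^+ q) ^+ q != x ^+ q.
    by apply/negP => /eqP /(@qinj L q qpos qadd) /eqP; apply/negP.
  have nx3 : (x ^+ q) ^+ q != x.
    apply/negP => /eqP e.
    have ek : forall k, x ^+ (q ^ (2 * k)) = x.
      elim=> [|k IH]; first by rewrite muln0 expn0 expr1.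
      by rewrite mulnS expnD mulnC exprM IH expnS expn1 exprM e.
    have : x ^+ (q ^ m) = x.
      by rewrite /q -expnM -cardL expf_card.
    rewrite -(odd_double_half m) modd -mul2n /=.
    by rewrite (addnC 1%N) expnD exprM ek expn1 => /eqP; apply/negP.
  have : (3 <= #|S|)%N.
    have -> : 3%N = #|[set x; x ^+ q; (x ^+ q) ^+ q]|.
      rewrite -setUA cardsU1 cards2 !inE negb_or eq_sym nx1 eq_sym nx3 eq_sym nx2.
      done.
    apply: subset_leq_card; apply/subsetP => y Hy.
    have : (y == x) || (y == x ^+ q) || (y == (x ^+ q) ^+ q) by move: Hy; rewrite !inE.
    by case/orP => [/orP [] | ] /eqP ->; rewrite ?Sq.
  move: Sle; rewrite hP2 => h1 h2; have := leq_trans h2 h1; done.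
Qed.
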